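(* Let $n\ge 2$ and $L=2^n+k$ with $0\le k<2^n$. (i) If $0\le k<2^{n-1}$, then among the words of length $L$ in $\mathrm{Sub}_\tau$ there are exactly two right-special words: the suffix of length $L$ of $\tau^n(a)$, whose extensions are by $x$, $y$ and $z$; and the suffix of length $L$ of the word $\tau^{n-2}(a)\,\tau^{n-2}(x)\,\tau^{n-1}(a)$, whose extensions are by $\tau^{n-2}(x)$ and by $\tau^{n-1}(x)$. (ii) If $2^{n-1}\le k<2^n$, then there is exactly one right-special word of length $L$ in $\mathrm{Sub}_\tau$, namely the suffix of length $L$ of $\tau^n(a)$, whose extensions are by $x$, $y$ and $z$.
   Context: Let $\mathcal{A}=\{a,x,y,z\}$ and let $\tau$ be the substitution (monoid morphism on finite words over $\mathcal{A}$) defined by $\tau(a)=axa$, $\tau(x)=y$, $\tau(y)=z$, $\tau(z)=x$; thus $\tau^m(x)$ equals $x$, $y$, $z$ according as $m\equiv 0,1,2 \pmod 3$. For a finite word $w$, $\mathrm{Sub}(w)$ denotes the set of finite (contiguous) subwords of $w$. Let $\mathrm{Sub}_\tau=\bigcup_{s\in\mathcal{A},\,n\in\mathbb{N}\cup\{0\}}\mathrm{Sub}(\tau^n(s))$. For $w\in\mathrm{Sub}_\tau$ and $s\in\mathcal{A}$, $w$ can be extended by $s$ if $ws\in\mathrm{Sub}_\tau$. A word $w\in\mathrm{Sub}_\tau$ is right-special if it can be extended by more than one letter of $\mathcal{A}$. *)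

(* Defs.v *)
From HB Require Import structures.
From mathcomp Require Import all_boot.
Set Implicit Arguments. Unset Strict Implicit. Unset Printing Implicit Defensive.

Inductive letter := la | lx | ly | lz.

Definition letter_eqb (u v : letter) : bool :=
  match u, v with
  | la, la | lx, lx | ly, ly | lz, lz => true
  | _, _ => false
  end.

Lemma letter_eqP : Equality.axiom letter_eqb.
Proof. by case; case; constructor. Qed.

HB.instance Definition _ := hasDecEq.Build letter letter_eqP.

Definition word := seq letter.

Definition tau_letter (s : letter) : word :=
  match s with
  | la => [:: la; lx; la]
  | lx => [:: ly]
  | ly => [:: lz]
  | lz => [:: lx]
  end.

Definition tau (w : word) : word := flatten (map tau_letter w).

Definition tauN (n : nat) (w : word) : word := iter n tau w.

Definition in_Sub_tau (w : word) : Prop :=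
  exists (s : letter) (n : nat), infix w (tauN n [:: s]).

Definition extends (w : word) (s : letter) : Prop := in_Sub_tau (rcons w s).

Definition right_special (w : word) : Prop :=
  in_Sub_tau w /\ exists s1 s2 : letter, s1 <> s2 /\ extends w s1 /\ extends w s2.

Definition suffix_len (L : nat) (u : word) : word := drop (size u - L) u.

(* Main.v *)
Require Import Defs.
From mathcomp Require Import all_boot zify.

Definition rho (s : letter) : letter :=
  match s with la => lx | lx => ly | ly => lz | lz => lx end.

Fixpoint uf (fuel i : nat) : letter :=
  match fuel with
  | 0 => lx
  | f.+1 => if odd i then la else rho (uf f i./2)
  end.

Definition u (i : nat) : letter := uf i i.

Lemma uf_indep f1 f2 i : 0 < i -> i <= f1 -> i <= f2 -> uf f1 i = uf f2 i.
Proof.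
elim: f1 f2 i => [|f1 IH] [|f2] i hi h1 h2 //=; try lia.
case: ifP => // ho; congr rho; have := odd_double_half i; rewrite ho /= => H;
apply: IH; lia.
Qed.

Lemma u_odd i : u i.*2.+1 = la.
Proof. by rewrite /u /= odd_double. Qed.

Lemma u_even i : 0 < i -> u i.*2 = rho (u i).
Proof.
move=> hi; rewrite /u {1}(_ : i.*2 = (i.*2).-1.+1); last lia.
rewrite /= odd_double doubleK; congr rho; apply: uf_indep; lia.
Qed.

Lemma rho_nla s : rho s != la. Proof. by case: s. Qed.

Lemma u_la i : 0 < i -> (u i == la) = odd i.
Proof.
move=> hi; have := odd_double_half i; case: (odd i) => /= H.
  by rewrite -H u_odd.
by rewrite -H add0n u_even ?(negbTE (rho_nla _)) //; lia.
Qed.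

Definition c (n : nat) : letter := iter n rho lx.

Lemma c_S n : c n.+1 = rho (c n). Proof. by []. Qed.

Lemma c3 n : c (n + 3) = c n.
Proof. rewrite /c iterD /=; by case: (iter n rho lx). Qed.

Lemma c_nla n : c n != la. Proof. by case: n => // n; rewrite c_S rho_nla. Qed.

Lemma rho_inj s t : s != la -> t != la -> rho s = rho t -> s = t.
Proof. by case: s; case: t. Qed.

Lemma u_pow j t : u (2 ^ j.+1 * t.*2.+1) = c j.
Proof.
elim: j => [|j IH].
  by rewrite expn1 mul2n u_even // u_odd.
by rewrite expnS -mulnA mul2n u_even ?IH //; rewrite muln_gt0 expn_gt0.
Qed.

Lemma u_per j t r : 0 < r -> r < 2 ^ j -> u (2 ^ j * t + r) = u r.
Proof.
elim: j r => [|j IH] r h1 h2; first by rewrite expn0 in h2; lia.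
have := odd_double_half r; set h := r./2; case: (odd r) => /= H; rewrite -H.
  have -> : 2 ^ j.+1 * t + (1 + h.*2) = (2 ^ j * t + h).*2.+1 by rewrite expnS; lia.
  by rewrite -addn1 addnC !u_odd.
have -> : 2 ^ j.+1 * t + (0 + h.*2) = (2 ^ j * t + h).*2 by rewrite expnS; lia.
rewrite add0n u_even; last lia.
rewrite u_even; last lia.
rewrite IH //; [lia|]. rewrite expnS in h2; lia.
Qed.

Definition seg (p L : nat) : word := map u (iota p L).

Lemma size_seg p L : size (seg p L) = L.
Proof. by rewrite size_map size_iota. Qed.

Lemma seg_nth p L i : i < L -> nth la (seg p L) i = u (p + i).
Proof. by move=> h; rewrite (nth_map 0) ?size_iota // nth_iota. Qed.

Lemma seg_eqP p p' L : seg p L = seg p' L <-> (forall i, i < L -> u (p + i) = u (p' + i)).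
Proof.
split=> [E i hi|H]; first by rewrite -(seg_nth p L i hi) -(seg_nth p' L i hi) E.
apply: (eq_from_nth (x0 := la)); rewrite ?size_seg // => i hi.
by rewrite !seg_nth // H.
Qed.

Lemma seg_cat p A B : seg p (A + B) = seg p A ++ seg (p + A) B.
Proof. by rewrite /seg iotaD map_cat. Qed.

Lemma seg1 p : seg p 1 = [:: u p].
Proof. by []. Qed.

Lemma seg_per j t A : A < 2 ^ j -> seg (2 ^ j * t + 1) A = seg 1 A.
Proof.
move=> hA; apply/seg_eqP => i hi.
rewrite -addnA u_per //; lia.
Qed.

Lemma suffix_seg p N L : L <= N -> suffix_len L (seg p N) = seg (p + N - L) L.
Proof.
move=> hL; rewrite /suffix_len size_seg /seg -map_drop drop_iota.
congr (map u (iota _ _)); lia.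
Qed.

Lemma seg_td p N j k : j + k <= N -> take k (drop j (seg p N)) = seg (p + j) k.
Proof.
move=> h; rewrite /seg -map_drop -map_take drop_iota take_iota.
congr (map u (iota _ _)); lia.
Qed.

Lemma tau_cat s t : tau (s ++ t) = tau s ++ tau t.
Proof. by rewrite /tau map_cat flatten_cat. Qed.

Lemma tauN_cat n s t : tauN n (s ++ t) = tauN n s ++ tauN n t.
Proof. elim: n => //= n IH. by rewrite /tauN /= -/(tauN n _) IH tau_cat. Qed.

Lemma tauN_S n w : tauN n.+1 w = tauN n (tau w).
Proof. by rewrite /tauN iterSr. Qed.

Lemma tauN_nla n s : s != la -> tauN n [:: s] = [:: iter n rho s].
Proof.
elim: n s => // n IH s hs; rewrite tauN_S.
have -> : tau [:: s] = [:: rho s] by case: s hs.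
by rewrite IH ?rho_nla // iterSr.
Qed.

Lemma tauN_x n : tauN n [:: lx] = [:: c n].
Proof. by rewrite tauN_nla. Qed.

Lemma tauN_a n : tauN n [:: la] = seg 1 (2 ^ n.+1 - 1).
Proof.
elim: n => [|n IH]; first by [].
rewrite tauN_S (_ : tau [:: la] = [:: la] ++ [:: lx] ++ [:: la]) //.
rewrite !tauN_cat IH tauN_x.
have E : 2 ^ n.+2 - 1 = (2 ^ n.+1 - 1) + (1 + (2 ^ n.+1 - 1)).
  rewrite expnS; have := expn_gt0 2 n.+1; lia.
rewrite E !seg_cat seg1.
have -> : 1 + (2 ^ n.+1 - 1) = 2 ^ n.+1 * (0.*2.+1).
  have := expn_gt0 2 n.+1; lia.
rewrite u_pow.
have -> : 2 ^ n.+1 * 0.*2.+1 + 1 = 2 ^ n.+1 * 1 + 1 by [].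
rewrite seg_per //; have := expn_gt0 2 n.+1; lia.
Qed.

Lemma big_pow n : n < 2 ^ n.
Proof. exact: ltn_expl. Qed.

Lemma Sub_seg p L : 0 < p -> in_Sub_tau (seg p L).
Proof.
move=> hp; exists la, (p + L); rewrite tauN_a.
set N := 2 ^ (p + L).+1 - 1.
have hN : p + L <= N by have := big_pow (p + L).+1; rewrite /N; lia.
have -> : N = (p - 1) + (L + (N - (p - 1) - L)) by lia.
rewrite !seg_cat (_ : 1 + (p - 1) = p); last lia.
exact: infix_infix.
Qed.

Lemma letter_pos s : s != la -> exists i, 0 < i /\ u i = s.
Proof.
case: s => // _; [exists 2 | exists 4 | exists 8]; by [].
Qed.

Lemma iter_nla n s : s != la -> iter n rho s != la.
Proof. by case: n => // n _; rewrite iterS rho_nla. Qed.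

Lemma Sub_char w : in_Sub_tau w -> w = [::] \/ exists p, 0 < p /\ w = seg p (size w).
Proof.
case=> s [n]; case: (eqVneq s la) => [->|hs].
  rewrite tauN_a => /infixP [s1 [s2 E]]; right; exists (1 + size s1); split; first lia.
  have : take (size w) (drop (size s1) (seg 1 (2 ^ n.+1 - 1))) = w.
    by rewrite E drop_size_cat // take_size_cat.
  move=> H; rewrite -{1}H seg_td //.
  have := congr1 size E; rewrite size_seg !size_cat; by move=> ->; rewrite addnA leq_addr.
rewrite tauN_nla // => /infixP [s1 [s2]].
case: w => [|b w]; first by left.
case: s1 => [|x s1] /=; last by case=> _; case: s1.
case=> <- E; right.
have -> : w = [::] by case: w E.
have [i [hi hu]] := letter_pos (iter n rho s) (iter_nla n s hs).
by exists i; split => //; rewrite /seg /=; congr cons.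
Qed.

Lemma seg_rcons p L : seg p L.+1 = rcons (seg p L) (u (p + L)).
Proof. by rewrite -addn1 seg_cat seg1 cats1. Qed.

Lemma extendsP w s :
  extends w s <-> exists p, 0 < p /\ w = seg p (size w) /\ s = u (p + size w).
Proof.
split.
  move=> /Sub_char [|[p [hp E]]]; first by case: w.
  move: E; rewrite size_rcons seg_rcons => /rcons_inj [Ew Es].
  by exists p.
move=> [p [hp [E ->]]]; rewrite /extends E size_seg -seg_rcons.
exact: Sub_seg.
Qed.

Definition EQ p p' L := forall i, i < L -> u (p + i) = u (p' + i).

Lemma u_odd' i : odd i -> u i = la.
Proof. by move=> h; have := odd_double_half i; rewrite h /= => <-; rewrite add1n u_odd. Qed.

Lemma u_even' i : 0 < i -> ~~ odd i -> u i <> la.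
Proof. move=> h1 h2; apply/eqP; rewrite u_la //. Qed.

Lemma par p p' L : 0 < L -> 0 < p -> 0 < p' -> EQ p p' L ->
  u (p + L) <> u (p' + L) -> ~~ odd (p + L) /\ ~~ odd (p' + L).
Proof.
move=> hL hp hp' E hne.
have := E (L - 1) ltac:(lia).
have e1 : p + (L - 1) + 1 = p + L by lia.
have e2 : p' + (L - 1) + 1 = p' + L by lia.
move=> H.
have hpar : odd (p + (L - 1)) = odd (p' + (L - 1)).
  by rewrite -u_la ?H ?u_la //; lia.
have o1 : odd (p + L) = ~~ odd (p + (L - 1)) by rewrite -e1 addn1 /=.
have o2 : odd (p' + L) = ~~ odd (p' + (L - 1)) by rewrite -e2 addn1 /=.
case O: (odd (p + L)).
  exfalso; apply: hne; rewrite !u_odd' //; by rewrite o2 -hpar -o1.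
by rewrite o2 -hpar -o1 O.
Qed.

Lemma u_mod4 k : k %% 4 = 2 -> u k = lx.
Proof.
move=> h; have -> : k = 2 ^ 1 * (k %/ 4).*2.+1 by rewrite expn1; lia.
by rewrite u_pow.
Qed.

Lemma u_evenq q g : 0 < g -> q = g.*2 -> u q = rho (u g).
Proof. by move=> h ->; rewrite u_even. Qed.

Lemma desub p p' L : 8 <= L -> 0 < p -> 0 < p' -> EQ p p' L ->
  u (p + L) <> u (p' + L) ->
  exists g g', [/\ 0 < g, 0 < g', p + odd L = g.*2 & p' + odd L = g'.*2] /\
     EQ g g' L./2 /\ u (g + L./2) <> u (g' + L./2).
Proof.
move=> hL hp hp' E hne.
have [ev ev'] := par p p' L ltac:(lia) hp hp' E hne.
have hLd := odd_double_half L.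
have hpd := odd_double_half (p + L).
have hpd' := odd_double_half (p' + L).
rewrite (negbTE ev) add0n in hpd; rewrite (negbTE ev') add0n in hpd'.
set m := L./2 in hLd *; set d := odd L in hLd *.
set f := (p + L)./2 in hpd; set f' := (p' + L)./2 in hpd'.
have hd : d <= 1 by case: (d).
exists (f - m), (f' - m).
have g1 : p + d = (f - m).*2 by lia.
have g2 : p' + d = (f' - m).*2 by lia.
have gp : 0 < f - m by lia.
have gp' : 0 < f' - m by lia.
have K1 : forall i, i < m -> u (p + (d + i.*2)) = rho (u (f - m + i)).
  by move=> i hi; apply: u_evenq; lia.
have K2 : forall i, i < m -> u (p' + (d + i.*2)) = rho (u (f' - m + i)).
  by move=> i hi; apply: u_evenq; lia.
have R : forall i, i < m -> rho (u (f - m + i)) = rho (u (f' - m + i)).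
  by move=> i hi; rewrite -K1 // -K2 // E //; lia.
have P : odd (f - m) = odd (f' - m).
  apply/eqP; apply: contraT => Hne.
  pose i := (6 - (f - m) %% 4) %% 4.
  have hi : i < m by rewrite /i; lia.
  have hx : u (f - m + i) = lx by apply: u_mod4; rewrite /i; lia.
  have ha : u (f' - m + i) = la.
    apply: u_odd'.
    have h1 : (f - m + i) %% 2 = 0 by rewrite /i; lia.
    have h2 : (f - m) %% 2 <> (f' - m) %% 2.
      by rewrite !modn2; move: Hne; case: (odd (f - m)); case: (odd (f' - m)).
    have h3 : (f' - m + i) %% 2 = 1 by lia.
    by move: h3; rewrite modn2; case: odd.
  by have := R i hi; rewrite hx ha.
split; first by [].
split.
  move=> i hi; case O: (odd (f - m + i)).
    by rewrite !u_odd' // oddD -P -oddD.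
  apply: rho_inj; last exact: R.
  - by apply/eqP; apply: u_even'; [lia | rewrite O].
  - by apply/eqP; apply: u_even'; [lia | rewrite oddD -P -oddD O].
move=> H; apply: hne.
rewrite (@u_evenq (p + L) (f - m + m)); [|lia|lia].
by rewrite H (@u_evenq (p' + L) (f' - m + m)); [|lia|lia].
Qed.

Lemma oddmod2 k : odd k = (k %% 2 == 1).
Proof. by rewrite modn2; case: odd. Qed.

Lemma up g R m d : 0 < g -> 0 < R -> d <= 1 -> EQ g R m ->
  EQ (g.*2 - d) (R.*2 - d) (m.*2 + d).
Proof.
move=> hg hR hd E i hi.
have hpar : odd (g.*2 - d + i) = odd (R.*2 - d + i).
  have H : (g.*2 - d + i) %% 2 = (R.*2 - d + i) %% 2 by rewrite -!mul2n; lia.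
  by rewrite !oddmod2 H.
case O: (odd (g.*2 - d + i)).
  by rewrite !u_odd' // -hpar.
have h := odd_double_half (g.*2 - d + i); rewrite O add0n in h.
set k := (g.*2 - d + i)./2 in h.
rewrite (@u_evenq (g.*2 - d + i) (g + (k - g))); [|lia|lia].
rewrite (@u_evenq (R.*2 - d + i) (R + (k - g))); [|lia|lia].
by rewrite E //; lia.
Qed.

Definition loc r s i := if (r + i) %% 8 == 0 then s else u ((r + i) %% 8).

Lemma local p : 0 < p -> exists s, s != la /\ forall i, i < 8 -> u (p + i) = loc (p %% 8) s i.
Proof.
move=> hp; exists (u (p + (8 - p %% 8) %% 8)); split.
  apply/eqP; apply: u_even'; first lia.
  by rewrite oddmod2; apply/eqP; lia.
move=> i hi; rewrite /loc; case: eqP => H.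
  by congr u; lia.
have -> : p + i = 2 ^ 3 * ((p + i) %/ 8) + (p %% 8 + i) %% 8 by lia.
by apply: u_per; lia.
Qed.

Definition allL (L : nat) (f g : nat -> letter) := all (fun i => f i == g i) (iota 0 L).

Lemma allLP L f g : allL L f g <-> forall i, i < L -> f i = g i.
Proof.
rewrite /allL; split.
  by move=> /allP H i hi; apply/eqP/H; rewrite mem_iota; lia.
by move=> H; apply/allP => i; rewrite mem_iota => hi; apply/eqP/H; lia.
Qed.

Definition chk : bool :=
  all (fun L => all (fun r => all (fun s => all (fun r' => all (fun s' =>
    (allL L (loc r s) (loc r' s') && (loc r s L != loc r' s' L)) ==>
    (allL L (loc r s) (fun i => u (8 - L + i)) ||
     ((L < 6) && allL L (loc r s) (fun i => u (20 - L + i)) && (loc r s L != lz))))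
   [:: lx; ly; lz]) (iota 0 8)) [:: lx; ly; lz]) (iota 0 8)) [:: 4; 5; 6; 7].

Lemma chk_ok : chk = true.
Proof. by vm_compute. Qed.

Definition Q n := forall L, 2 ^ n <= L -> L < 2 ^ n.+1 -> forall p p', 0 < p -> 0 < p' ->
  EQ p p' L -> u (p + L) <> u (p' + L) ->
  EQ p (2 ^ n.+1 - L) L \/
  (L < 3 * 2 ^ n.-1 /\ EQ p (5 * 2 ^ n - L) L /\ u (p + L) <> c n).

Lemma letter3 s : s != la -> s \in [:: lx; ly; lz].
Proof. by case: s. Qed.

Lemma Q2 : Q 2.
Proof.
move=> L h1 h2 p p' hp hp' E hne.
have [s [hs Hs]] := local p hp.
have [s' [hs' Hs']] := local p' hp'.
have hL : L \in [:: 4; 5; 6; 7].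
  by clear -h1 h2; move: h1 h2; rewrite !inE; case: L => [|[|[|[|[|[|[|[|[|L]]]]]]]]].
have hr : p %% 8 \in iota 0 8 by rewrite mem_iota; lia.
have hr' : p' %% 8 \in iota 0 8 by rewrite mem_iota; lia.
have L8 : L < 8 by lia.
have HL : loc (p %% 8) s L != loc (p' %% 8) s' L.
  by rewrite -Hs // -Hs' //; apply/eqP.
have HA : allL L (loc (p %% 8) s) (loc (p' %% 8) s').
  apply/allLP => i hi; rewrite -Hs ?(ltn_trans hi) // -Hs' ?(ltn_trans hi) //; exact: E.
move: chk_ok; rewrite /chk => /allP /(_ L hL) /allP /(_ _ hr) /allP /(_ _ (letter3 s hs))
  /allP /(_ _ hr') /allP /(_ _ (letter3 s' hs')) /implyP.
rewrite HA HL /=.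
move=> /(_ isT) /orP [/allLP H|/andP [/andP [H6 /allLP H] Hz]].
  left => i hi; rewrite Hs ?(ltn_trans hi) // H //.
right; split; first by [].
split; last by rewrite Hs //; apply/eqP.
move=> i hi; rewrite Hs ?(ltn_trans hi) // H //.
Qed.

Lemma Qstep n : 2 <= n -> Q n -> Q n.+1.
Proof.
move=> hn IH L h1 h2 p p' hp hp' E hne.
have e1 : 2 ^ n.+1 = 2 * 2 ^ n by rewrite expnS.
have e2 : 2 ^ n.+2 = 4 * 2 ^ n by rewrite !expnS; lia.
have e3 : 2 ^ n = 2 * 2 ^ n.-1 by rewrite -expnS; congr expn; lia.
have e4 : 4 <= 2 ^ n by rewrite (_ : 4 = 2 ^ 2) // leq_exp2l.
have [g [g' [[hg hg' eg eg'] [E' hne']]]] := desub p p' L ltac:(lia) hp hp' E hne.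
have hLd := odd_double_half L.
set m := L./2 in E' hne' hLd; set d := odd L in eg eg' hLd.
have hd : d <= 1 by case: (d).
have [ev _] := par g g' m ltac:(lia) hg hg' E' hne'.
have Eu : u (p + L) = rho (u (g + m)) by apply: u_evenq; lia.
case: (IH m ltac:(lia) ltac:(lia) g g' hg hg' E' hne') => [H|[H1 [H2 H3]]].
  left; have := up g (2 ^ n.+1 - m) m d hg ltac:(lia) hd H.
  have -> : g.*2 - d = p by lia.
  have -> : (2 ^ n.+1 - m).*2 - d = 2 ^ n.+2 - L by lia.
  by have -> : m.*2 + d = L by lia.
right; split; first by rewrite /=; lia.
split.
  have := up g (5 * 2 ^ n - m) m d hg ltac:(lia) hd H2.
  have -> : g.*2 - d = p by lia.
  have -> : (5 * 2 ^ n - m).*2 - d = 5 * 2 ^ n.+1 - L by lia.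
  by have -> : m.*2 + d = L by lia.
rewrite Eu c_S => H; apply: H3; apply: rho_inj H; last exact: c_nla.
by apply/eqP; apply: u_even'; [lia|].
Qed.

Lemma Qall n : 2 <= n -> Q n.
Proof.
elim: n => // n IH hn.
case: (ltnP n 2) => h.
  by rewrite (_ : n.+1 = 2); [exact: Q2|lia].
by apply: Qstep => //; apply: IH.
Qed.

Lemma c_cases k s : s != la -> s = c k \/ s = c k.+1 \/ s = c k.+2.
Proof. rewrite !c_S; have := c_nla k; case: (c k); case: s => //=; auto. Qed.

Lemma rho_neq s : rho s <> s. Proof. by case: s. Qed.

Lemma w1_eq n L : L < 2 ^ n.+1 -> suffix_len L (tauN n [:: la]) = seg (2 ^ n.+1 - L) L.
Proof. move=> h; rewrite tauN_a suffix_seg; [congr seg; lia | lia]. Qed.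

Lemma shift j t L : 0 < t -> L < 2 ^ j -> seg (2 ^ j * t - L) L = seg (2 ^ j - L) L.
Proof.
move=> ht hL; apply/seg_eqP => i hi.
have hP := expn_gt0 2 j; set P := 2 ^ j in hL hP *.
have -> : P * t - L + i = P * (t - 1) + (P - L + i) by rewrite mulnBr muln1; nia.
by rewrite u_per //; lia.
Qed.

Lemma u_2pow j : u (2 ^ j.+1) = c j.
Proof. by have := u_pow j 0; rewrite muln1. Qed.

Lemma tauN_aS k : tauN k.+1 [:: la] = tauN k [:: la] ++ [:: c k] ++ tauN k [:: la].
Proof.
rewrite tauN_S (_ : tau [:: la] = [:: la] ++ [:: lx] ++ [:: la]) //.
by rewrite !tauN_cat tauN_x.
Qed.

Lemma seg_per' k t : seg (2 ^ k.+1 * t + 1) (2 ^ k.+1 - 1) = seg 1 (2 ^ k.+1 - 1).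
Proof. apply: seg_per; have := expn_gt0 2 k.+1; lia. Qed.

Lemma five k t : let B := 2 ^ k.+1 in let A := B - 1 in
  u (B * t.+1) = c k -> u (B * t.+2) = c k ->
  seg (B * t + 1) (3 * B - 1) = seg 1 A ++ [:: c k] ++ seg 1 A ++ [:: c k] ++ seg 1 A.
Proof.
move=> B A h3 h4.
have hB : 0 < B := expn_gt0 2 k.+1.
have -> : 3 * B - 1 = A + (1 + (A + (1 + A))) by rewrite /A; lia.
rewrite !seg_cat !seg1.
have -> : B * t + 1 + A = B * t.+1 by rewrite /A; nia.
have -> : B * t.+1 + 1 + A = B * t.+2 by rewrite /A; nia.
rewrite h3 h4 /A /B !seg_per'.
by [].
Qed.

Lemma w2_eq k : tauN k [:: la] ++ tauN k [:: lx] ++ tauN k.+1 [:: la] =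
  seg (2 ^ k.+1 * 7 + 1) (3 * 2 ^ k.+1 - 1) /\
  seg (2 ^ k.+1 * 6 + 1) (3 * 2 ^ k.+1 - 1) = seg (2 ^ k.+1 * 7 + 1) (3 * 2 ^ k.+1 - 1).
Proof.
have h8 : u (2 ^ k.+1 * 8) = c k.
  by rewrite (_ : 2 ^ k.+1 * 8 = 2 ^ (k + 3).+1) ?u_2pow ?c3 // -addSn expnD.
have h9 : u (2 ^ k.+1 * 9) = c k by have := u_pow k 4.
have h7 : u (2 ^ k.+1 * 7) = c k by have := u_pow k 3.
rewrite tauN_aS tauN_a tauN_x (five k 7 h8 h9) (five k 6 h7 h8); split => //.
Qed.

Lemma ext_nla q L s : 0 < L -> 0 < q -> odd (q + L - 1) -> extends (seg q L) s -> s <> la.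
Proof.
move=> hL hq ho /extendsP [p [hp [E ->]]]; move: E; rewrite size_seg => /seg_eqP E.
have := E (L - 1) ltac:(lia); rewrite (_ : q + (L - 1) = q + L - 1); last lia.
rewrite (_ : p + (L - 1) = p + L - 1); last lia.
rewrite (u_odd' _ ho) => /esym /eqP; rewrite u_la; last lia.
move=> hodd; apply: u_even'; first lia.
rewrite (_ : p + L = (p + L - 1).+1) /=; last lia.
by rewrite hodd.
Qed.

Lemma rs_to L w : 0 < L -> size w = L -> right_special w ->
  exists p p', [/\ 0 < p, 0 < p', w = seg p L, EQ p p' L & u (p + L) <> u (p' + L)].
Proof.
move=> hL hs [_ [s1 [s2 [hne [e1 e2]]]]].
move/extendsP: e1 => [p [hp [E1 H1]]]; move/extendsP: e2 => [p' [hp' [E2 H2]]].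
rewrite hs in E1 E2 H1 H2; subst s1 s2; exists p, p'; split => //.
by apply/seg_eqP; rewrite -E1 -E2.
Qed.

Lemma rs_from L w p p' : 0 < p -> 0 < p' -> w = seg p L -> w = seg p' L ->
  u (p + L) <> u (p' + L) -> right_special w.
Proof.
move=> hp hp' E1 E2 hne; split; first by rewrite E1; apply: Sub_seg.
have Hs : size w = L by rewrite E1 size_seg.
exists (u (p + L)), (u (p' + L)); split => //; split; apply/extendsP.
  by exists p; rewrite Hs.
by exists p'; rewrite Hs.
Qed.

Theorem theorem2 (n k : nat) (hn : 2 <= n) (hk : k < 2 ^ n) :
  let L := 2 ^ n + k in
  let w1 := suffix_len L (tauN n [:: la]) in
  let w2 := suffix_len L (tauN (n - 2) [:: la] ++ tauN (n - 2) [:: lx]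
                          ++ tauN (n - 1) [:: la]) in
  (k < 2 ^ (n - 1) ->
     w1 <> w2 /\
     (forall w : word, size w = L -> (right_special w <-> w = w1 \/ w = w2)) /\
     (forall s : letter, extends w1 s <-> s = lx \/ s = ly \/ s = lz) /\
     (forall s : letter, extends w2 s <->
        [:: s] = tauN (n - 2) [:: lx] \/ [:: s] = tauN (n - 1) [:: lx])) /\
  (2 ^ (n - 1) <= k ->
     (forall w : word, size w = L -> (right_special w <-> w = w1)) /\
     (forall s : letter, extends w1 s <-> s = lx \/ s = ly \/ s = lz)).
Proof.
case: n hn hk => [|[|m]] // _ hk L w1 w2.
have e2 : m.+2 - 2 = m by lia.
have e1 : m.+2 - 1 = m.+1 by lia.
rewrite e1.
have hLd : L = 2 ^ m.+2 + k by [].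
have hB : 0 < 2 ^ m.+1 by rewrite expn_gt0.
have eB1 : 2 ^ m.+2 = 2 * 2 ^ m.+1 by rewrite expnS.
have eB2 : 2 ^ m.+3 = 4 * 2 ^ m.+1 by rewrite !expnS; lia.
have eB3 : 2 ^ m.+4 = 8 * 2 ^ m.+1 by rewrite !expnS; lia.
have eB4 : 2 ^ m.+4.+1 = 16 * 2 ^ m.+1 by rewrite !expnS; lia.
have hL1 : 2 * 2 ^ m.+1 <= L by lia.
have hL2 : L < 4 * 2 ^ m.+1 by lia.
have Ew1 : w1 = seg (2 ^ m.+3 - L) L by rewrite /w1 w1_eq //; lia.
have W1occ : forall j, m.+3 <= j -> seg (2 ^ j - L) L = w1.
  move=> j hj; rewrite Ew1 (_ : 2 ^ j = 2 ^ m.+3 * 2 ^ (j - m.+3)).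
    by apply: shift; [exact: expn_gt0 | lia].
  by rewrite -expnD subnKC.
have sw1 : size w1 = L by rewrite Ew1 size_seg.
have U3 : u (2 ^ m.+3) = c m.+2 by rewrite u_2pow.
have U4 : u (2 ^ m.+4) = c m.+3 by rewrite u_2pow.
have U5 : u (2 ^ m.+4.+1) = c m.+4 by rewrite u_2pow.
have ext1 : forall s, extends w1 s <-> s = lx \/ s = ly \/ s = lz.
  move=> s; split.
    rewrite Ew1 => H.
    have : s <> la.
      apply: (ext_nla (2 ^ m.+3 - L) L s _ _ _ H); try lia.
    by clear H; case: s => [/(_ erefl) []|||] _; auto.
  move=> hs; have hs' : s != la by case: hs => [->|[->|->]].
  apply/extendsP; rewrite sw1.
  have [e|[e|e]] := c_cases m.+2 s hs'.
  - exists (2 ^ m.+3 - L); split; first lia; split; first by symmetry; apply: W1occ; lia.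
    by rewrite subnK ?U3 //; lia.
  - exists (2 ^ m.+4 - L); split; first lia; split; first by symmetry; apply: W1occ; lia.
    by rewrite subnK ?U4 //; lia.
  - exists (2 ^ m.+4.+1 - L); split; first lia; split; first by symmetry; apply: W1occ; lia.
    by rewrite subnK ?U5 //; lia.
have rs1 : right_special w1.
  apply: (rs_from L w1 (2 ^ m.+3 - L) (2 ^ m.+4 - L)); [lia|lia|exact: Ew1| by rewrite W1occ|].
  rewrite !subnK; [|lia|lia]; rewrite U3 U4 (c_S m.+2) => H; exact: rho_neq (esym H).
have QQ := Qall m.+2 ltac:(by []) L ltac:(lia) ltac:(lia).
split.
  move=> hki.
  have sw2' : size w2 <= 3 * 2 ^ m.+1 - 1.
    by rewrite /w2 e2 e1 /suffix_len size_drop !size_cat !tauN_a tauN_x !size_seg /=; lia.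
  have Ew2 : w2 = seg (5 * 2 ^ m.+2 - L) L.
    rewrite /w2 e2 e1 (proj1 (w2_eq m)) suffix_seg; [congr seg; lia|lia].
  have sw2 : size w2 = L by rewrite Ew2 size_seg.
  have W2occ : seg (9 * 2 ^ m.+1 - L) L = w2.
    have [_ H] := w2_eq m; have := congr1 (suffix_len L) H.
    rewrite !suffix_seg; [|lia|lia]; rewrite Ew2 => H'.
    rewrite (_ : 9 * 2 ^ m.+1 - L = 2 ^ m.+1 * 6 + 1 + (3 * 2 ^ m.+1 - 1) - L); last lia.
    by rewrite H'; congr seg; lia.
  have U52 : u (5 * 2 ^ m.+2) = c m.+1.
    by rewrite (_ : 5 * 2 ^ m.+2 = 2 ^ m.+2 * (2.*2.+1)); [exact: u_pow | lia].
  have U9 : u (9 * 2 ^ m.+1) = c m.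
    by rewrite (_ : 9 * 2 ^ m.+1 = 2 ^ m.+1 * (4.*2.+1)); [exact: u_pow | lia].
  have hneq : w1 <> w2.
    rewrite Ew1 Ew2 => /seg_eqP /(_ (L - 2 ^ m.+2) ltac:(lia)).
    rewrite (_ : 2 ^ m.+3 - L + (L - 2 ^ m.+2) = 2 ^ m.+2); last lia.
    rewrite (_ : 5 * 2 ^ m.+2 - L + (L - 2 ^ m.+2) = 2 ^ m.+4); last lia.
    rewrite !u_2pow -addn3 c3 c_S; exact: rho_neq.
  split; first exact: hneq.
  split.
    move=> w hw; split.
      move/(rs_to L w ltac:(lia) hw) => [p [p' [hp hp' Ew E hne]]].
      case: (QQ p p' hp hp' E hne) => [H|[_ [H _]]]; [left|right];
        rewrite Ew ?Ew1 ?Ew2; apply/seg_eqP => i hi; exact: H.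
    move=> [->|->]; first exact: rs1.
    apply: (rs_from L w2 (5 * 2 ^ m.+2 - L) (9 * 2 ^ m.+1 - L)); [lia|lia|exact: Ew2|by rewrite W2occ|].
    rewrite !subnK; [|lia|lia]; rewrite U52 U9 c_S; exact: rho_neq.
  split; first exact: ext1.
  move=> s; rewrite !tauN_x e2; split.
    move=> H.
    have hsla : s <> la.
      apply: (ext_nla (5 * 2 ^ m.+2 - L) L s _ _ _); [lia|lia| |by rewrite -Ew2].
      by rewrite oddmod2; apply/eqP; lia.
    have [e|[e|e]] := c_cases m s (introN eqP hsla).
    - by left; rewrite e.
    - by right; rewrite e.
    exfalso; move/extendsP: H => [p [hp [Ew He]]]; rewrite sw2 in Ew He.
    have E : EQ p (5 * 2 ^ m.+2 - L) L by apply/seg_eqP; rewrite -Ew Ew2.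
    have hne : u (p + L) <> u (5 * 2 ^ m.+2 - L + L).
      rewrite -He subnK; last lia.
      rewrite U52 e (c_S m.+1); exact: rho_neq.
    case: (QQ p (5 * 2 ^ m.+2 - L) hp ltac:(lia) E hne) => [H1|[_ [_ H3]]].
      by apply: hneq; rewrite Ew Ew1; apply/esym/seg_eqP.
    by apply: H3; rewrite -He e.
  move=> [[->]|[->]].
    apply/extendsP; exists (9 * 2 ^ m.+1 - L); rewrite sw2; split; first lia.
    split; first by rewrite W2occ.
    by rewrite subnK ?U9 //; lia.
  apply/extendsP; exists (5 * 2 ^ m.+2 - L); rewrite sw2; split; first lia.
  split; first exact: Ew2.
  by rewrite subnK ?U52 //; lia.
move=> hkii; split; last exact: ext1.
move=> w hw; split.
  move/(rs_to L w ltac:(lia) hw) => [p [p' [hp hp' Ew E hne]]].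
  case: (QQ p p' hp hp' E hne) => [H|[H _]].
    by rewrite Ew Ew1; apply/seg_eqP.
  exfalso; move: H; rewrite /=; lia.
by move=> ->.
Qed.
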